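(* Let $M$ be a principally Goldie*-lifting right $R$-module. (a) If $M$ is distributive (or a duo module), then $M/N$ is principally Goldie*-lifting for every submodule $N$ of $M$. (b) If $N$ is a projection invariant submodule of $M$, i.e. $eN\subseteq N$ for every idempotent $e=e^2\in\mathrm{End}(M)$, then $M/N$ is principally Goldie*-lifting; in particular $M/A$ is principally Goldie*-lifting for every fully invariant submodule $A$ of $M$.
   Context: $R$ is an associative ring with identity; modules are unital right $R$-modules. $M$ is distributive if for all submodules $A,B,C$, $A+(B\cap C)=(A+B)\cap(A+C)$. A submodule is fully invariant if it is mapped into itself by every endomorphism of $M$; $M$ is a duo module if every submodule is fully invariant. $K\ll L$ means $K$ is small in $L$. For submodules $X,Y$ of a module $L$, $X\,\beta^*\,Y$ means $(X+Y)/X\ll L/X$ and $(X+Y)/Y\ll L/Y$. A module $L$ is principally Goldie*-lifting if for every cyclic submodule $X$ of $L$ there is a direct summand $D$ of $L$ with $X\,\beta^*\,D$. *)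

(* Defs.v *)
From HB Require Import structures.
From mathcomp Require Import all_boot all_order all_algebra.
Set Implicit Arguments. Unset Strict Implicit. Unset Printing Implicit Defensive.
Import GRing.Theory.
Local Open Scope ring_scope.

(* Right R-modules are modelled as left modules over the converse ring
   R^c = GRing.converse R (so that  x r  is written  (r : R^c) *: x ). *)
Notation rmodType R := (lmodType (GRing.converse R)).

Section ModuleTheory.
Variable (S : nzRingType) (M : lmodType S).

Definition submod (A : M -> Prop) : Prop :=
  A 0 /\ forall (a : S) (u v : M), A u -> A v -> A (a *: u + v).

Definition msub (A B : M -> Prop) : Prop := forall x, A x -> B x.
Definition meq (A B : M -> Prop) : Prop := forall x, A x <-> B x.
Definition madd (A B : M -> Prop) : M -> Prop :=
  fun x => exists a b, A a /\ B b /\ x = a + b.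
Definition mcap (A B : M -> Prop) : M -> Prop := fun x => A x /\ B x.
Definition mfull : M -> Prop := fun _ => True.
Definition mzero : M -> Prop := fun x => x = 0.

Definition cyclic_sub (x : M) : M -> Prop := fun y => exists r : S, y = r *: x.

Definition small (K : M -> Prop) : Prop :=
  submod K /\ forall X, submod X -> meq (madd K X) mfull -> meq X mfull.

(* For submodules X <= K of M:  K/X is small in M/X.  Submodules of M/X are
   identified with submodules W of M containing X (correspondence theorem). *)
Definition small_mod (X K : M -> Prop) : Prop :=
  forall W, submod W -> msub X W -> meq (madd K W) mfull -> meq W mfull.

(* X beta* Y :  (X+Y)/X << M/X  and  (X+Y)/Y << M/Y *)
Definition beta_star (X Y : M -> Prop) : Prop :=
  small_mod X (madd X Y) /\ small_mod Y (madd X Y).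

Definition direct_summand (D : M -> Prop) : Prop :=
  submod D /\ exists D', submod D' /\ meq (madd D D') mfull /\ meq (mcap D D') mzero.

Definition principally_goldie_star_lifting : Prop :=
  forall x : M, exists D, direct_summand D /\ beta_star (cyclic_sub x) D.

Definition distributive : Prop :=
  forall A B C, submod A -> submod B -> submod C ->
    meq (madd A (mcap B C)) (mcap (madd A B) (madd A C)).

Definition fully_invariant (A : M -> Prop) : Prop :=
  submod A /\ forall (f : {linear M -> M}) x, A x -> A (f x).

Definition duo : Prop := forall A, submod A -> fully_invariant A.

Definition projection_invariant (A : M -> Prop) : Prop :=
  submod A /\ forall (e : {linear M -> M}), (forall x, e (e x) = e x) ->
    forall x, A x -> A (e x).

(* Q is (isomorphic to) the quotient M/N : there is a surjective
   homomorphism M -> Q with kernel N. *)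
Definition is_quotient_by (N : M -> Prop) (Q : lmodType S) (f : {linear M -> Q}) : Prop :=
  (forall q : Q, exists m, f m = q) /\ (forall m, N m <-> f m = 0).

End ModuleTheory.

(* Main.v *)
Require Import Defs.
From HB Require Import structures.
From mathcomp Require Import all_boot all_order all_algebra.
From Stdlib Require Import ClassicalEpsilon.
Set Implicit Arguments. Unset Strict Implicit.
Import GRing.Theory.
Local Open Scope ring_scope.

Section Aux.
Variables (S : nzRingType) (M : lmodType S).

Lemma subm_sub (A : M -> Prop) u v : submod A -> A u -> A v -> A (u - v).
Proof.
move=> [_ HC] Hu Hv; have := HC (-1) v u Hv Hu.
by rewrite scaleN1r addrC.
Qed.

Variables (D D' : M -> Prop).
Hypotheses (sD : submod D) (sD' : submod D') (Hsum : meq (madd D D') (@mfull S M))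
  (Hcap : meq (mcap D D') (@mzero S M)).

Lemma ex_dec m : exists a, D a /\ D' (m - a).
Proof.
have [a [b [Da [Db ->]]]] := proj2 (Hsum m) I.
by exists a; split => //; rewrite addrAC subrr add0r.
Qed.

Definition pe m := proj1_sig (constructive_indefinite_description _ (ex_dec m)).

Lemma pe_spec m : D (pe m) /\ D' (m - pe m).
Proof. by rewrite /pe; case: constructive_indefinite_description. Qed.

Lemma pe_uniq m a : D a -> D' (m - a) -> pe m = a.
Proof.
move=> Da Da'; have [h1 h2] := pe_spec m.
have H : mcap D D' (pe m - a).
  split; first exact: subm_sub.
  have := subm_sub sD' Da' h2.
  by rewrite opprB addrC addrA subrK.
by apply/eqP; rewrite -subr_eq0; apply/eqP; exact: (proj1 (Hcap _) H).
Qed.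

Lemma pe_lin : linear pe.
Proof.
move=> a u v; apply: pe_uniq.
  by apply: (proj2 sD); apply pe_spec.
have -> : a *: u + v - (a *: pe u + pe v) = a *: (u - pe u) + (v - pe v).
  by rewrite opprD addrACA scalerBr.
by apply: (proj2 sD'); apply pe_spec.
Qed.

Definition pe_linear : {linear M -> M} :=
  HB.pack pe (GRing.isLinear.Build _ _ _ _ pe pe_lin).

Lemma pe_idem x : pe_linear (pe_linear x) = pe_linear x.
Proof.
apply: pe_uniq; first by apply pe_spec.
by rewrite subrr; exact: (proj1 sD').
Qed.

Lemma proj_HN (N : M -> Prop) : projection_invariant N ->
  forall d d', D d -> D' d' -> N (d - d') -> N d.
Proof.
move=> [_ HN] d d' Dd Dd' Hn.
have := HN pe_linear pe_idem _ Hn.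
suff -> : pe_linear (d - d') = d by [].
apply: pe_uniq => //.
have -> : d - d' - d = - d' by rewrite addrC addKr.
by have := subm_sub sD' (proj1 sD') Dd'; rewrite sub0r.
Qed.

Lemma distr_HN (N : M -> Prop) : distributive M -> submod N ->
  forall d d', D d -> D' d' -> N (d - d') -> N d.
Proof.
move=> Hd sN d d' Dd Dd' Hn.
have [n [c [Nn [Hc ->]]]] := proj2 (Hd N D D' sN sD sD' d)
  (conj (ex_intro _ 0 (ex_intro _ d (conj (proj1 sN) (conj Dd (esym (add0r d))))))
        (ex_intro _ (d - d') (ex_intro _ d' (conj Hn (conj Dd' (esym (subrK d' d))))))).
by rewrite (proj1 (Hcap c) Hc) addr0.
Qed.

End Aux.

Section Quot.
Variables (S : nzRingType) (M Q : lmodType S) (f : {linear M -> Q}).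

Definition img (D : M -> Prop) : Q -> Prop := fun y => exists d, D d /\ y = f d.

Lemma preim_submod W : submod W -> submod (fun m => W (f m)).
Proof.
move=> [W0 WC]; split; first by rewrite linear0.
by move=> a u v Hu Hv; rewrite linearP; exact: WC.
Qed.

Lemma img_submod D : submod D -> submod (img D).
Proof.
move=> [D0 DC]; split; first by exists 0; rewrite linear0.
move=> a _ _ [u [Du ->]] [v [Dv ->]]; exists (a *: u + v); split; first exact: DC.
by rewrite linearP.
Qed.

Lemma transfer (X Y Z : M -> Prop) (X' Y' Z' : Q -> Prop) :
  (forall q, exists m, f m = q) ->
  small_mod Z (madd X Y) ->
  (forall y, X' y -> exists x, X x /\ y = f x) ->
  (forall y, Y' y -> exists x, Y x /\ y = f x) ->
  (forall x, Z x -> Z' (f x)) ->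
  small_mod Z' (madd X' Y').
Proof.
move=> surj Hs HX HY HZ W Wsub ZW Hfull q; split => // _.
have Hpre : meq (fun m => W (f m)) (@mfull S M).
  apply: Hs; first exact: preim_submod.
    by move=> x Zx; apply: ZW; exact: HZ.
  move=> m; split => // _.
  have [k [w [[x' [y' [Hx' [Hy' Hk]]]] [Ww Hm]]]] := proj2 (Hfull (f m)) I.
  have [x [Xx Ex]] := HX _ Hx'; have [y [Yy Ey]] := HY _ Hy'.
  exists (x + y), (m - (x + y)); split; first by exists x, y.
  split; last by rewrite addrC subrK.
  by rewrite linearB linearD Hm Hk Ex Ey addrAC subrr add0r.
have [m <-] := surj q; exact: (proj2 (Hpre m) I).
Qed.

Lemma quotient_pgl (N : M -> Prop) :
  principally_goldie_star_lifting M -> is_quotient_by N f ->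
  (forall D D', submod D -> submod D' -> meq (madd D D') (@mfull S M) ->
     meq (mcap D D') (@mzero S M) ->
     forall d d', D d -> D' d' -> N (d - d') -> N d) ->
  principally_goldie_star_lifting Q.
Proof.
move=> HM [surj Hker] HN q; have [x <-] := surj q.
have [D [[sD [D' [sD' [Hsum Hcap]]]] [b1 b2]]] := HM x.
exists (img D); split.
  split; first exact: img_submod.
  exists (img D'); split; first exact: img_submod.
  split.
    move=> y; split => // _; have [m <-] := surj y.
    have [d [d' [Dd [Dd' ->]]]] := proj2 (Hsum m) I.
    exists (f d), (f d'); split; first by exists d.
    split; first by exists d'.
    by rewrite linearD.
  move=> y; split.
    move=> [[d [Dd Ey]] [d' [Dd' Ey']]].
    have Hn : N (d - d') by apply/Hker; rewrite linearB -Ey -Ey' subrr.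
    have := HN _ _ sD sD' Hsum Hcap _ _ Dd Dd' Hn => /Hker.
    by rewrite /mzero Ey.
  move=> ->; split; exists 0; (split; [exact: (proj1 sD) || exact: (proj1 sD') | by rewrite linear0]).
split.
  apply: (transfer surj b1).
  - move=> y [r ->]; exists (r *: x); split; first by exists r.
    by rewrite linearZZ.
  - by move=> y [d [Dd ->]]; exists d.
  - by move=> _ [r ->]; exists r; rewrite linearZZ.
apply: (transfer surj b2).
- move=> y [r ->]; exists (r *: x); split; first by exists r.
  by rewrite linearZZ.
- by move=> y [d [Dd ->]]; exists d.
- by move=> d Dd; exists d.
Qed.

End Quot.

Theorem corollary3p11 (R : nzRingType) (M : rmodType R) :
  principally_goldie_star_lifting M ->
  (* (a) *)
  ((distributive M \/ duo M) ->
     forall (N : M -> Prop), submod N ->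
     forall (Q : rmodType R) (f : {linear M -> Q}),
       is_quotient_by N f -> principally_goldie_star_lifting Q) /\
  (* (b) *)
  (forall (N : M -> Prop), projection_invariant N ->
     forall (Q : rmodType R) (f : {linear M -> Q}),
       is_quotient_by N f -> principally_goldie_star_lifting Q) /\
  (* (b), in particular *)
  (forall (A : M -> Prop), fully_invariant A ->
     forall (Q : rmodType R) (f : {linear M -> Q}),
       is_quotient_by A f -> principally_goldie_star_lifting Q).
Proof.
move=> HM.
have Hb : forall (N : M -> Prop), projection_invariant N ->
     forall (Q : rmodType R) (f : {linear M -> Q}),
       is_quotient_by N f -> principally_goldie_star_lifting Q.
  move=> N HN Q f Hq; apply: (quotient_pgl HM Hq).
  move=> D D' sD sD' Hs Hc; exact: (proj_HN sD sD' Hs Hc HN).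
have fi_pi : forall A : M -> Prop, fully_invariant A -> projection_invariant A.
  by move=> A [sA HA]; split => // e _; exact: HA.
split; last split => //.
- move=> [Hd|Hd] N sN Q f Hq.
    apply: (quotient_pgl HM Hq) => D D' sD sD' Hs Hc.
    exact: (distr_HN sD sD' Hc Hd sN).
  by apply: (Hb N (fi_pi N (Hd N sN)) Q f Hq).
- by move=> A HA; apply: Hb; exact: fi_pi.
Qed.
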